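(* Let $(R,B)$ be an EIC problem with problem graph $G=(V,E)$ and sender neighborhoods $N_1,\dots,N_n$, and let $\mathscr C=\{V(C): C \text{ is a maximal clique in } G|_{N_i}\text{ for some } i\}$. For every neighborhood partition $(\tilde N_1,\dots,\tilde N_n)$ there exists a cover $\mathcal C$ of $V$ by elements of $\mathscr C$ such that $$\sum_{C_j\in\mathcal C}\chi\big(\overline{G|_{C_j}}\big)=\sum_{i=1}^n\chi\big(\overline{G|_{\tilde N_i}}\big).$$
   Context: An EIC problem is a pair $(R,B)$ of matrices in $\mathbb{F}_2^{n\times m}$ with disjoint supports (node $u$ needs block $a$ iff $R_{ua}=1$, has it iff $B_{ua}=1$). $P=\{(u,a):R_{ua}=1\}$. The problem graph $G=(V,E)$ has vertices $V=\{v_{(u,a)}:(u,a)\in P\}$ and a directed edge from $v_{(u,a)}$ to $v_{(w,b)}$ iff $B_{ub}=1$ or $a=b$; $G|_S$ is the subgraph induced on $S$. Sender neighborhood of node $k$: $N_k=\{v_{(w,b)}\in V:B_{kb}=1\}$. A neighborhood partition is a tuple $(\tilde N_1,\dots,\tilde N_n)$ with $\tilde N_i\subseteq N_i$, pairwise disjoint, union $V$. For a directed graph $H$ (loops disregarded): $\overline H$ has edge $(x,y)$, $x\ne y$, iff $(x,y)\notin E(H)$; a clique is a vertex set in which every ordered pair of distinct vertices is an edge (maximal if not properly contained in another clique); an independent set contains no edge in either direction; $\chi(H)$ is the minimum number of independent sets partitioning the vertex set ($0$ if empty). A cover of $V$ by elements of $\mathscr C$ is a collection of members of $\mathscr C$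 whose union is $V$. *)

(* Defs.v *)
From mathcomp Require Import all_boot all_algebra.
Set Implicit Arguments. Unset Strict Implicit. Unset Printing Implicit Defensive.
Import GRing.Theory.
Local Open Scope ring_scope.

(* Vertices of a problem graph are pairs (u,a) : 'I_n * 'I_m. *)
Definition pair_t (n m : nat) := ('I_n * 'I_m)%type.

Section EIC.
Variables (n m : nat) (R B : 'M['F_2]_(n, m)).

Definition probV : {set pair_t n m} := [set p | R p.1 p.2 == 1].

Definition Gedge : rel (pair_t n m) :=
  fun p q => [&& p \in probV, q \in probV & (B p.1 q.2 == 1) || (p.2 == q.2)].

Definition sendN (k : 'I_n) : {set pair_t n m} :=
  [set q in probV | B k q.2 == 1].
End EIC.

Section Graphs.
Variable T : finType.

(* a directed graph is given by a vertex set S and a relation e (loops disregarded) *)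

Definition clique (e : rel T) (C : {set T}) : bool :=
  [forall x in C, forall y in C, (x != y) ==> e x y].

Definition indep (e : rel T) (A : {set T}) : bool :=
  [forall x in A, forall y in A, (x != y) ==> ~~ e x y].

Definition compl_rel (e : rel T) : rel T := fun x y => (x != y) && ~~ e x y.

(* The singleton partition
   (of size #|S|) is always admissible, so #|S| is a valid initial bound. *)
Definition chi (S : {set T}) (e : rel T) : nat :=
  \big[minn/#|S|]_(P : {set {set T}} | partition P S && [forall A in P, indep e A])
     #|P|.
End Graphs.

Definition scrC (n m : nat) (R B : 'M['F_2]_(n, m)) : {set {set pair_t n m}} :=
  [set C | [exists i : 'I_n,
     maxset (fun D : {set pair_t n m} => (D \subset sendN R B i) && clique (Gedge R B) D) C]].

(* Main.v *)
Require Import Defs.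
From mathcomp Require Import all_boot all_algebra.
Import GRing.Theory.
Local Open Scope ring_scope.

Module Helpers.
Set Implicit Arguments. Unset Strict Implicit. Unset Printing Implicit Defensive.
Local Open Scope nat_scope.

Lemma bigmin_le_seq (I : eqType) (r : seq I) (Q : pred I) (f : I -> nat) x0 j :
  j \in r -> Q j -> \big[minn/x0]_(i <- r | Q i) f i <= f j.
Proof.
elim: r => [|a r IH] //; rewrite inE big_cons => /orP[/eqP <-|jr] Qj.
  by rewrite Qj geq_minl.
case: (Q a); last exact: IH.
by rewrite (leq_trans (geq_minr _ _)) // IH.
Qed.

Lemma bigmin_le (I : finType) (Q : pred I) (f : I -> nat) x0 j :
  Q j -> \big[minn/x0]_(i | Q i) f i <= f j.
Proof. by move=> Qj; apply: bigmin_le_seq => //; rewrite mem_index_enum. Qed.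

Lemma bigmin_ge (I : finType) (Q : pred I) (f : I -> nat) x0 b :
  b <= x0 -> (forall i, Q i -> b <= f i) -> b <= \big[minn/x0]_(i | Q i) f i.
Proof.
move=> h0 hi; apply: (big_ind (fun v => b <= v)) => //.
by move=> u v hu hv; rewrite leq_min hu hv.
Qed.

Section G.
Variable T : finType.
Variable e : rel T.

Definition adm (S : {set T}) (P : {set {set T}}) :=
  partition P S && [forall A in P, indep (compl_rel e) A].

Lemma indep_compl A : indep (compl_rel e) A = clique e A.
Proof.
apply/forall_inP/forall_inP => h x xA; apply/forall_inP => y yA;
  apply/implyP => xy; have /forall_inP/(_ y yA)/implyP/(_ xy) := h x xA;
  by rewrite /compl_rel xy /= ?negbK // => ->.
Qed.

Lemma part_card_le (P : {set {set T}}) (S : {set T}) : partition P S -> #|P| <= #|S|.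
Proof.
move=> hP; rewrite (card_partition hP) -sum1_card; apply: leq_sum => A AP.
case/and3P: hP => _ _ h0; rewrite card_gt0; apply: contraNneq h0 => <-.
by [].
Qed.

Lemma adm_exists S : exists P, adm S P.
Proof.
exists (preim_partition id S); rewrite /adm preim_partitionP /=.
apply/forall_inP => Bk BP; apply/forall_inP => x xB; apply/forall_inP => y yB.
apply/implyP => xy; exfalso; move: xy => /negP; apply.
have hP := preim_partitionP id S.
case/and3P: (hP) => /eqP hc ht _.
have xS : x \in S by rewrite -hc; apply/bigcupP; exists Bk.
have yS : y \in S by rewrite -hc; apply/bigcupP; exists Bk.
have := @pblock_equivalence_partition T (fun x y => id x == id y) S.
move=> /(_ _ x y xS yS); rewrite (def_pblock ht BP xB) yB => <- //.
by split => // /eqP ->.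
Qed.

Lemma chi_spec S : exists2 P, adm S P & chi S (compl_rel e) = #|P|.
Proof.
have [P0 h0] := adm_exists S.
case: (arg_minnP (fun P : {set {set T}} => #|P|) h0) => P hP hmin.
exists P => //; apply/eqP; rewrite eqn_leq; apply/andP; split.
  exact: bigmin_le.
apply: bigmin_ge => [|Q hQ]; last exact: hmin.
by case/andP: hP => /part_card_le.
Qed.

Lemma chi_one S : S != set0 -> clique e S -> chi S (compl_rel e) = 1%N.
Proof.
move=> Sn0 cS; have [P hP hc] := chi_spec S.
have h1 : adm S [set S].
  rewrite /adm /partition cover1 eqxx trivIset1 inE eq_sym Sn0 /=.
  by apply/forall_inP => A; rewrite inE => /eqP ->; rewrite indep_compl.
have := bigmin_le (fun P : {set {set T}} => #|P|) #|S| h1.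
rewrite cards1 -/(chi S (compl_rel e)) => hle.
apply/eqP; rewrite eqn_leq hle hc card_gt0.
case/andP: hP => /and3P [/eqP hcov _ _] _; apply: contra Sn0 => /eqP P0.
by rewrite -hcov P0 /cover big_set0.
Qed.
End G.
End Helpers.
Import Helpers.

Theorem lemma6 (n m : nat) (R B : 'M['F_2]_(n, m))
  (hdisj : forall u a, (R u a == 0) || (B u a == 0))
  (Nt : 'I_n -> {set pair_t n m})
  (hsub : forall i, Nt i \subset sendN R B i)
  (hdis : forall i j, i != j -> [disjoint Nt i & Nt j])
  (hcov : \bigcup_(i < n) Nt i = probV R) :
  exists cs : seq {set pair_t n m},
    [/\ forall C, C \in cs -> C \in scrC R B,
        \bigcup_(C <- cs) C = probV R &
        (\sum_(C <- cs) chi C (compl_rel (Gedge R B)) =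
         \sum_(i < n) chi (Nt i) (compl_rel (Gedge R B)))%N].
Proof.
set e := Gedge R B.
pose adm' i P := adm e (Nt i) P && (chi (Nt i) (compl_rel e) == #|P|).
pose Pi i := odflt set0 [pick P | adm' i P].
have hPi i : adm e (Nt i) (Pi i) /\ chi (Nt i) (compl_rel e) = #|Pi i|.
  rewrite /Pi; case: pickP => [P /andP[h /eqP ->]|h] //=.
  have [P hP hc] := chi_spec e (Nt i).
  by move: (h P); rewrite /adm' hP hc eqxx.
pose mx i := fun D : {set pair_t n m} => (D \subset sendN R B i) && clique e D.
pose ext i (K : {set pair_t n m}) :=
  odflt set0 [pick C | maxset (mx i) C && (K \subset C)].
have hext i K : K \in Pi i ->
    [/\ maxset (mx i) (ext i K), K \subset ext i K & K != set0].
  move=> KP; have [/andP[/and3P[/eqP hc _ h0] /forall_inP hind] _] := hPi i.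
  have Kn0 : K != set0 by apply: contraNneq h0 => <-.
  have mK : mx i K.
    rewrite /mx -indep_compl (hind K KP) andbT.
    apply: subset_trans (hsub i); rewrite -hc; exact: bigcup_sup.
  have [C hC KC] := maxset_exists mK.
  rewrite /ext; case: pickP => [C' /andP[h1 h2]|h] /=; first by [].
  by move: (h C); rewrite hC KC.
set cs := flatten [seq [seq ext i K | K <- enum (Pi i)] | i <- index_enum 'I_n].
have memcs C : C \in cs -> exists i, exists2 K, K \in Pi i & C = ext i K.
  move=> /flattenP [s /mapP [i _ ->] /mapP [K KP ->]].
  by exists i, K; rewrite // mem_enum in KP.
exists cs; split.
- move=> C /memcs [i [K KP ->]]; rewrite inE; apply/existsP; exists i.
  by case: (hext i K KP).
- apply/eqP; rewrite eqEsubset; apply/andP; split.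
  + rewrite bigcup_seq; apply/bigcupsP => C /memcs [i [K KP ->]].
    case: (hext i K KP) => /maxsetp /andP [h _] _ _.
    apply: subset_trans h _; apply/subsetP => x; rewrite inE => /andP[] //.
  + rewrite -hcov; apply/subsetP => x /bigcupP [i _ xi].
    have [/andP[/and3P[/eqP hc _ _] _] _] := hPi i.
    move: xi; rewrite -hc => /bigcupP [K KP xK].
    case: (hext i K KP) => _ /subsetP KE _.
    rewrite bigcup_seq; apply/bigcupP; exists (ext i K); last exact: KE.
    apply/flattenP; exists [seq ext i K | K <- enum (Pi i)].
      by apply/mapP; exists i; rewrite ?mem_index_enum.
    by apply/mapP; exists K; rewrite ?mem_enum.
- rewrite big_flatten big_map /=; apply: eq_bigr => i _.
  rewrite big_map (hPi i).2 -sum1_card -big_enum.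
  apply: eq_big_seq => K; rewrite mem_enum => KP.
  case: (hext i K KP) => /maxsetp /andP [_ hcl] hK Kn0; apply: chi_one => //.
  by apply: contraNneq Kn0 => h0; rewrite -subset0 -h0 hK.
Qed.
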